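(* Let $v$ be a flow on a compact surface. If $\mathrm{Cl}(v)=\Omega(v)$, then $\mathrm{Cl}(v)$ is closed and there are no non-closed recurrent points, no non-periodic limit circuits, and no circuits with wandering holonomy.
   Context: Surface: 2-dimensional paracompact manifold, possibly with boundary, possibly non-orientable. $\mathrm{Cl}(v)$ is the union of singular points and periodic orbits; $\Omega(v)$ the set of non-wandering points; $x$ is recurrent if $x\in\omega(x)\cup\alpha(x)$. A separatrix is a non-singular orbit whose $\alpha$- or $\omega$-limit set is a singular point. A non-trivial circuit is the image of an oriented circle under a continuous orientation-preserving map which is either a periodic orbit, or a directed graph (not a singleton) that is a union of separatrices and finitely many singular points; it is periodic if it is a periodic orbit. A collar of $\gamma$ is an open annulus with $\gamma$ as a boundary component which is a component of $U-\gamma$ for some neighborhood $U$ of $\gamma$. $\gamma$ is semi-attracting (resp. semi-repelling) w.r.t. a small collar $\mathbb{A}$ if $\omega(x)=\gamma$, $O^+(x)\subset\mathbb{A}$ (resp. $\alpha(x)=\gamma$, $O^-(x)\subset\mathbb{A}$) for all $x\in\mathbb{A}$. A limit circuit is a non-trivial circuit that is semi-attracting or semi-repelling. A circuit with wandering holonomy is a non-trivial circuit $\gamma$ for which there are a non-singular $x\in\gamma$ and arbitrarily small open transverse arcs $I\ni x$ such that the first return map on $I$ is orientation-reversing, has nonempty domain, and its domain and image are disjoint. *)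

(* Defs.v *)
From HB Require Import structures.
From mathcomp Require Import all_boot all_order all_algebra.
From mathcomp Require Import all_classical all_reals all_analysis.
From mathcomp Require Import Rstruct Rstruct_topology.
Set Implicit Arguments. Unset Strict Implicit. Unset Printing Implicit Defensive.
Import Order.TTheory GRing.Theory Num.Theory.
Local Open Scope classical_set_scope.
Local Open Scope ring_scope.

Notation RR := Rdefinitions.R.

Definition homeo_on {X Y : topologicalType} (D : set X) (E : set Y)
    (f : X -> Y) : Prop :=
  f @` D = E /\
  {in D &, injective f} /\
  {within D, continuous f} /\
  exists g : Y -> X, (forall y, E y -> D (g y) /\ f (g y) = y) /\
                     {within E, continuous g}.

(* The closed upper half-plane, the model of a surface with boundary. *)
Definition half_plane : set (RR * RR) := [set p | 0 <= p.2].

Definition surface (T : topologicalType) : Prop :=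
  hausdorff_space T /\
  forall x : T, exists (U : set T) (W : set (RR * RR)) (phi : RR * RR -> T),
    open U /\ U x /\ open W /\ homeo_on (W `&` half_plane) U phi.

Definition compact_surface (T : topologicalType) : Prop :=
  surface T /\ compact [set: T].

Definition is_flow {T : topologicalType} (v : RR -> T -> T) : Prop :=
  continuous (fun p : RR * T => v p.1 p.2) /\
  (forall x, v 0 x = x) /\
  (forall s t x, v (s + t) x = v s (v t x)).

Section FlowNotions.
Context {T : topologicalType} (v : RR -> T -> T).

Definition orbit (x : T) : set T := [set v t x | t in [set: RR]].
Definition forward_orbit (x : T) : set T := [set v t x | t in [set t | 0 <= t]].
Definition backward_orbit (x : T) : set T := [set v t x | t in [set t | t <= 0]].

Definition singular (x : T) : Prop := forall t, v t x = x.

Definition periodic_point (x : T) : Prop :=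
  ~ singular x /\ exists P : RR, 0 < P /\ v P x = x.

Definition Clv : set T := [set x | singular x \/ periodic_point x].

Definition omega_limit (x : T) : set T :=
  [set y | forall N : RR, closure [set v t x | t in [set t | N <= t]] y].
Definition alpha_limit (x : T) : set T :=
  [set y | forall N : RR, closure [set v t x | t in [set t | t <= N]] y].

Definition nonwandering (x : T) : Prop :=
  forall U : set T, nbhs x U -> forall N : RR,
    exists t, N <= t /\ exists y, U y /\ U (v t y).
Definition Omegav : set T := [set x | nonwandering x].

Definition recurrent (x : T) : Prop := omega_limit x x \/ alpha_limit x x.

Definition separatrix (O : set T) : Prop :=
  exists x, O = orbit x /\ ~ singular x /\
    exists p, singular p /\ (omega_limit x = [set p] \/ alpha_limit x = [set p]).

Definition periodic_orbit (gamma : set T) : Prop :=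
  exists x, periodic_point x /\ gamma = orbit x.

(* A continuous map f from the oriented circle R/Z (as a 1-periodic map on R)
   is orientation-preserving (w.r.t. the flow direction) if near every
   parameter whose image is non-singular, f moves forward along the flow
   with a strictly increasing continuous time change. *)
Definition orientation_preserving_loop (f : RR -> T) : Prop :=
  forall s, ~ singular (f s) ->
    exists (d : RR) (h : RR -> RR), 0 < d /\ h 0 = 0 /\
      {within [set u | `|u| < d], continuous h} /\
      (forall u1 u2, `|u1| < d -> `|u2| < d -> u1 < u2 -> h u1 < h u2) /\
      (forall u, `|u| < d -> f (s + u) = v (h u) (f s)).

Definition nontrivial_circuit (gamma : set T) : Prop :=
  (exists f : RR -> T, (forall s, f (s + 1) = f s) /\ continuous f /\
     range f = gamma /\ orientation_preserving_loop f) /\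
  (periodic_orbit gamma \/
   ((~ exists p, gamma = [set p]) /\
    exists P : set T, finite_set P /\ P `<=` gamma /\ P `<=` singular /\
      forall y, gamma y -> P y \/ (separatrix (orbit y) /\ orbit y `<=` gamma))).

Definition periodic_circuit (gamma : set T) : Prop :=
  nontrivial_circuit gamma /\ periodic_orbit gamma.

Definition std_annulus : set (RR * RR) :=
  [set p | 1 < p.1 ^+ 2 + p.2 ^+ 2 < 4].

(* A collar of gamma: an open annulus A, which is a connected component of
   U - gamma for a neighbourhood U of gamma, having gamma as a boundary
   component (gamma is exactly the set of accumulation points of the inner
   end of A under some homeomorphism with the standard annulus). *)
Definition collar (gamma A : set T) : Prop :=
  open A /\
  (exists U : set T, (exists W : set T, open W /\ gamma `<=` W /\ W `<=` U) /\
     exists y, A = connected_component (U `\` gamma) y) /\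
  exists phi : RR * RR -> T, homeo_on std_annulus A phi /\
    gamma = [set z | forall e : RR, 0 < e ->
      closure (phi @` [set p | 1 < p.1 ^+ 2 + p.2 ^+ 2 < 1 + e]) z].

Definition semi_attracting (gamma : set T) : Prop :=
  exists A, collar gamma A /\
    forall x, A x -> omega_limit x = gamma /\ forward_orbit x `<=` A.
Definition semi_repelling (gamma : set T) : Prop :=
  exists A, collar gamma A /\
    forall x, A x -> alpha_limit x = gamma /\ backward_orbit x `<=` A.

Definition limit_circuit (gamma : set T) : Prop :=
  nontrivial_circuit gamma /\ (semi_attracting gamma \/ semi_repelling gamma).

Definition unit_open : set RR := [set s | 0 < s < 1].

(* I is an open transverse arc, parametrised by phi: phi maps ]0,1[
   homeomorphically onto I, and for some e > 0 the flow map
   (t, s) |-> v t (phi s) maps ]-e,e[ x ]0,1[ homeomorphically onto an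
   open subset of T (flow box). *)
Definition transverse_arc (I : set T) (phi : RR -> T) : Prop :=
  homeo_on unit_open I phi /\
  exists e : RR, 0 < e /\
    let B := [set p : RR * RR | `|p.1| < e /\ unit_open p.2] in
    open ((fun p : RR * RR => v p.1 (phi p.2)) @` B) /\
    homeo_on B ((fun p : RR * RR => v p.1 (phi p.2)) @` B)
             (fun p : RR * RR => v p.1 (phi p.2)).

(* First return map on I, as a relation: z = P(y). *)
Definition first_return (I : set T) (y z : T) : Prop :=
  I y /\ exists t, 0 < t /\ v t y = z /\ I z /\
    forall s, 0 < s -> s < t -> ~ I (v s y).

Definition return_domain (I : set T) : set T :=
  [set y | exists z, first_return I y z].
Definition return_image (I : set T) : set T :=
  [set z | exists y, first_return I y z].

Definition return_orientation_reversing (I : set T) (phi : RR -> T) : Prop :=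
  forall s, unit_open s -> return_domain I (phi s) ->
    exists d : RR, 0 < d /\
      forall s1 s2 r1 r2, unit_open s1 -> unit_open s2 -> unit_open r1 ->
        unit_open r2 -> `|s1 - s| < d -> `|s2 - s| < d -> s1 < s2 ->
        first_return I (phi s1) (phi r1) -> first_return I (phi s2) (phi r2) ->
        r2 < r1.

Definition wandering_holonomy_circuit (gamma : set T) : Prop :=
  nontrivial_circuit gamma /\
  exists x, gamma x /\ ~ singular x /\
    forall W : set T, nbhs x W ->
      exists (I : set T) (phi : RR -> T),
        I `<=` W /\ I x /\ transverse_arc I phi /\
        return_orientation_reversing I phi /\
        return_domain I !=set0 /\
        [disjoint return_domain I & return_image I].

End FlowNotions.

(* Main.v *)
Require Import Defs.
From HB Require Import structures.
From mathcomp Require Import all_boot all_order all_algebra.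
From mathcomp Require Import all_classical all_reals all_analysis.
From mathcomp Require Import Rstruct Rstruct_topology.
From mathcomp Require Import lra.
Set Implicit Arguments. Unset Strict Implicit. Unset Printing Implicit Defensive.
Import Order.TTheory GRing.Theory Num.Theory.
Local Open Scope classical_set_scope.
Local Open Scope ring_scope.

Lemma omega_nw (T : topologicalType) (v : RR -> T -> T) x y :
  is_flow v -> omega_limit v x y -> nonwandering v y.
Proof.
move=> [_ [v0 vadd]] Hy U HU N.
have [_ [[t1 t1ge0 <-] Ut1]] := Hy 0 U HU.
have [_ [[t2 t2ge <-] Ut2]] := Hy (t1 + N) U HU.
exists (t2 - t1); split; first by move: t2ge => /=; lra.
by exists (v t1 x); split => //; rewrite -vadd subrK.
Qed.

Lemma alpha_nw (T : topologicalType) (v : RR -> T -> T) x y :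
  is_flow v -> alpha_limit v x y -> nonwandering v y.
Proof.
move=> [_ [v0 vadd]] Hy U HU N.
have [_ [[t1 t1ge0 <-] Ut1]] := Hy 0 U HU.
have [_ [[t2 t2ge <-] Ut2]] := Hy (t1 - N) U HU.
exists (t1 - t2); split; first by move: t2ge => /=; lra.
by exists (v t2 x); split => //; rewrite -vadd subrK.
Qed.

Lemma Omega_closed (T : topologicalType) (v : RR -> T -> T) :
  closed (Omegav v).
Proof.
move=> x Hx U HU N.
have [V [[oV Vx] VU]] : exists V, (open V /\ V x) /\ V `<=` U.
  by move: HU; rewrite nbhsE => -[V [? ?] ?]; exists V.
have [z [Oz Vz]] := Hx V (open_nbhs_nbhs (conj oV Vx)).
have [t [tN [y [Vy Vty]]]] := Oz V (open_nbhs_nbhs (conj oV Vz)) N.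
by exists t; split => //; exists y; split; apply: VU.
Qed.
Lemma finite_range_const (T : topologicalType) (f : RR -> T) (P : set T) :
  hausdorff_space T -> continuous f -> finite_set P -> range f `<=` P ->
  range f = [set f 0].
Proof.
move=> hT cf fP rP.
have acc := hausdorff_accessible hT.
have cl : forall A : set T, finite_set A -> closed A.
  by apply/accessible_finite_set_closed.
set S := f @^-1` [set f 0].
have Sc : closed S.
  by move/continuous_closedP: cf; apply; apply: cl; apply: finite_set1.
have So : open S.
  have -> : S = ~` (f @^-1` (P `\ f 0)).
    apply/seteqP; split => s /=.
      by move=> -> [_ /(_ erefl)].
    move=> H; apply: contrapT => nS; apply: H; split => //.
    by apply: rP; exists s.
  rewrite openC; move/continuous_closedP: cf; apply; apply: cl.
  exact: finite_setD.
have ST : S = setT.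
  apply: (connected_intervalP [set: RR]).2 => //.
  - by exists 0.
  - by exists S => //; rewrite setTI.
  - by exists S => //; rewrite setTI.
apply/seteqP; split => z.
  by move=> [s _ <-]; have : S s by rewrite ST.
by move=> ->; exists 0.
Qed.
Lemma archi_mul (N P : RR) : 0 < P -> exists n : nat, `|N| < n%:R * P.
Proof.
move=> P0; exists (Num.Def.archi_bound (`|N| / P)).
rewrite -ltr_pdivrMr //; apply: archi_boundP.
by apply: divr_ge0 => //; apply: ltW.
Qed.

Lemma vn_periodic (T : topologicalType) (v : RR -> T -> T) x P :
  is_flow v -> v P x = x -> forall n : nat, v (n%:R * P) x = x.
Proof.
move=> [_ [v0 vadd]] Px; elim => [|n IH]; first by rewrite mul0r v0.
by rewrite -addn1 natrD mulrDl mul1r vadd Px IH.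
Qed.

Lemma periodic_limits (T : topologicalType) (v : RR -> T -> T) x P :
  is_flow v -> 0 < P -> v P x = x -> omega_limit v x x /\ alpha_limit v x x.
Proof.
move=> fl P0 Px; have [_ [v0 vadd]] := fl.
split => N; have [n Hn] := archi_mul N P0; apply: subset_closure.
  exists (n%:R * P); last exact: vn_periodic.
  by rewrite /=; have := ler_norm N; lra.
exists (- (n%:R * P)).
  by rewrite /=; have := ler_norm (- N); rewrite normrN; lra.
by rewrite -{1}(vn_periodic fl Px n) -vadd addNr v0.
Qed.

Lemma sep_min (H : set RR) e : 0 < e -> (forall h, H h -> 0 < h) ->
  (forall h1 h2, H h1 -> H h2 -> h1 < h2 -> e <= h2 - h1) ->
  forall h0, H h0 -> exists m, H m /\ forall h, H h -> m <= h.
Proof.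
move=> e0 Hpos Hsep.
suff : forall n : nat, forall h0, H h0 -> h0 < n%:R * e ->
    exists m, H m /\ forall h, H h -> m <= h.
  move=> Hn h0 Hh0; have [n Hn'] := archi_mul h0 e0.
  by apply: (Hn n h0 Hh0); have := ler_norm h0; lra.
elim => [|n IH] h0 Hh0 lt.
  by have := Hpos _ Hh0; rewrite mul0r in lt; lra.
have [[h [Hh hlt]]|nex] := pselect (exists h, H h /\ h < h0).
  apply: (IH h Hh); have := Hsep _ _ Hh Hh0 hlt.
  by move: lt; rewrite -addn1 natrD mulrDl mul1r; lra.
exists h0; split => // h Hh; rewrite leNgt; apply/negP => hlt.
by apply: nex; exists h.
Qed.

Lemma arc_sep (T : topologicalType) (v : RR -> T -> T) I phi :
  is_flow v -> transverse_arc v I phi ->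
  exists e, 0 < e /\ forall w t, 0 < t -> t < e -> I w -> I (v t w) -> False.
Proof.
move=> [_ [v0 vadd]] [[img _] [e [e0 [_ [_ [inj _]]]]]].
exists e; split => // w t t0 te Iw Itw.
rewrite -img in Iw Itw; case: Iw => s Us ws; case: Itw => s' Us' ws'.
have [] : (t, s) = (0, s').
  apply: inj; rewrite ?inE /=.
  - by split => //; rewrite ger0_norm //; apply: ltW.
  - by split => //; rewrite normr0.
  - by rewrite v0 ws ws'.
by move=> tz _; move: t0; rewrite tz ltxx.
Qed.

Lemma first_return_fwd (T : topologicalType) (v : RR -> T -> T) I phi x t0 :
  is_flow v -> transverse_arc v I phi -> I x -> 0 < t0 -> I (v t0 x) ->
  exists z, first_return v I x z.
Proof.
move=> fl tr Ix t00 It0; have [_ [v0 vadd]] := fl.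
have [e [e0 sep]] := arc_sep fl tr.
pose H := [set t | 0 < t /\ I (v t x)].
have [m [[m0 Im] mmin]] : exists m, H m /\ forall h, H h -> m <= h.
  apply: (@sep_min H e e0 _ _ t0) => [h [] //| h1 h2 [h10 I1] [h20 I2] lt|]; last first.
    by split.
  rewrite leNgt; apply/negP => lt2.
  apply: (sep (v h1 x) (h2 - h1)) => //; first by rewrite subr_gt0.
  by rewrite -vadd subrK.
exists (v m x); split => //; exists m; do 3!split => //.
move=> s s0 sm Is; have := mmin s (conj s0 Is); rewrite leNgt sm //.
Qed.

Lemma first_return_bwd (T : topologicalType) (v : RR -> T -> T) I phi x t0 :
  is_flow v -> transverse_arc v I phi -> I x -> 0 < t0 -> I (v (- t0) x) ->
  exists y, first_return v I y x.
Proof.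
move=> fl tr Ix t00 It0; have [_ [v0 vadd]] := fl.
have [e [e0 sep]] := arc_sep fl tr.
pose H := [set t | 0 < t /\ I (v (- t) x)].
have [m [[m0 Im] mmin]] : exists m, H m /\ forall h, H h -> m <= h.
  apply: (@sep_min H e e0 _ _ t0) => [h [] //| h1 h2 [h10 I1] [h20 I2] lt|]; last first.
    by split.
  rewrite leNgt; apply/negP => lt2.
  apply: (sep (v (- h2) x) (h2 - h1)) => //; first by rewrite subr_gt0.
  by rewrite -vadd; have -> : h2 - h1 + - h2 = - h1 by lra.
exists (v (- m) x); split => //; exists m; split => //; split.
  by rewrite -vadd addrN v0.
split => // s s0 sm Is.
have : H (m - s).
  split; first by lra.
  by move: Is; rewrite -vadd; have -> : s + - m = - (m - s) by lra.
by move/mmin; lra.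
Qed.

Lemma periodic_no_holonomy (T : topologicalType) (v : RR -> T -> T) I phi x P :
  is_flow v -> transverse_arc v I phi -> I x -> 0 < P -> v P x = x ->
  [disjoint return_domain v I & return_image v I] -> False.
Proof.
move=> fl tr Ix P0 Px /disj_setPS dis; have [_ [v0 vadd]] := fl.
have [z Hz] : exists z, first_return v I x z.
  by apply: (first_return_fwd fl tr Ix P0); rewrite Px.
have [y Hy] : exists y, first_return v I y x.
  apply: (first_return_bwd fl tr Ix P0).
  by rewrite -{1}Px -vadd addNr v0.
by apply: (dis x); split; [exists z|exists y].
Qed.
Lemma hsep (T : topologicalType) (p q : T) : hausdorff_space T -> p <> q ->
  exists A B, nbhs p A /\ nbhs q B /\ (forall z, A z -> B z -> False).
Proof.
move=> hT pq.
have : ~ (forall A B, nbhs p A -> nbhs q B -> A `&` B !=set0).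
  by move=> H; apply: pq; apply: hT => A B HA HB; apply: H.
move=> /existsNP [A /existsNP [B /not_implyP [HA /not_implyP [HB nAB]]]].
exists A, B; split => //; split => // z Az Bz; apply: nAB; by exists z.
Qed.

Lemma no_return_near (T : topologicalType) (v : RR -> T -> T) x (a b : RR) :
  is_flow v -> hausdorff_space T -> (forall t, a <= t <= b -> v t x <> x) ->
  exists V, nbhs x V /\ forall y t, V y -> a <= t <= b -> V (v t y) -> False.
Proof.
move=> [cf _] hT nper.
have cK := @segment_compact _ a b.
move/compact_near_coveringP: cK => /(_ (T * T)%type (nbhs (x, x))
  (fun i t => v t i.1 <> i.2) _) H.
have : \forall i \near nbhs (x, x), `[a, b] `<=` (fun t => v t i.1 <> i.2).
  apply: H => t; rewrite /= in_itv /= => /andP [ta tb].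
  have [A [B [HA [HB AB]]]] := hsep hT (nper t (introT andP (conj ta tb))).
  have := cf (t, x) A HA => -[[W1 W2] /= [HW1 HW2] sub].
  exists (W1, W2 `*` B) => /=; first by split => //; exists (W2, B).
  move=> [t' [y w]] /= [W1t [W2y Bw]] eq.
  have : A (v t' y) by apply: (sub (t', y)).
  by rewrite eq => Aw; apply: (AB w).
move=> -[[V1 V2] /= [HV1 HV2] sub].
exists (V1 `&` V2); split; first by apply: filterI.
move=> y t [V1y V2y] abt [V1t V2t].
have := sub (y, v t y) (conj V1y V2t) t; rewrite /= in_itv /= abt; apply => //.
Qed.
Definition nli (f : RR -> RR) (a b c : RR) := forall d, 0 < d ->
  exists r r', r != r' /\ a <= r <= b /\ a <= r' <= b /\
    `|r - c| < d /\ `|r' - c| < d /\ f r = f r'.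

Lemma cont_within_itv (f : RR -> RR) (a b a' b' : RR) :
  (forall r, a <= r <= b -> {for r, continuous f}) -> a <= a' -> b' <= b ->
  {within `[a', b'], continuous f}.
Proof.
move=> cf aa bb; apply: continuous_subspace_itv => r; rewrite in_itv /= => /andP[h1 h2].
by apply: cf; apply/andP; split; lra.
Qed.

Lemma max_case (f : RR -> RR) (a b c : RR) : a < b ->
  (forall r, a <= r <= b -> {for r, continuous f}) -> f a = f b ->
  a <= c <= b -> (forall t, a <= t <= b -> f t <= f c) -> f a < f c ->
  nli f a b c.
Proof.
move=> ab cf fab /andP[ac cb] cmax fac d d0.
have ca : a < c by rewrite lt_neqAle ac andbT; apply/eqP => ea; move: fac; rewrite ea ltxx.
have cb' : c < b by rewrite lt_neqAle cb andbT; apply/eqP => eb; move: fac; rewrite eb fab ltxx.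
pose del := Num.min (d / 2) (Num.min ((c - a) / 2) ((b - c) / 2)).
have del0 : 0 < del by rewrite !lt_min; apply/and3P; split; lra.
have dd : del <= d / 2 by rewrite ge_min lexx.
have dca : del <= (c - a) / 2 by rewrite !ge_min lexx orbT.
have dcb : del <= (b - c) / 2 by rewrite !ge_min lexx !orbT.
have r1in : a <= c - del <= b by apply/andP; split; lra.
have r2in : a <= c + del <= b by apply/andP; split; lra.
have [le12|le21] := leP (f (c - del)) (f (c + del)).
  have h1 : c - del <= c by lra.
  have h2 : a <= c - del by lra.
  have h3 : c <= b by lra.
  have := @IVT _ f (c - del) c (f (c + del)) h1 (cont_within_itv cf h2 h3).
  case.
    by rewrite ge_min le_max le12 /= orbC (cmax _ r2in).
  move=> r; rewrite in_itv /= => /andP[k1 k2] fr.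
  exists r, (c + del); split; first by apply/eqP => e; lra.
  split; first by apply/andP; split; lra.
  split => //; split; first by rewrite ltr_distlC; apply/andP; split; lra.
  by split => //; rewrite addrAC subrr add0r ger0_norm; lra.
have h1 : c <= c + del by lra.
have h2 : a <= c by lra.
have h3 : c + del <= b by lra.
have := @IVT _ f c (c + del) (f (c - del)) h1 (cont_within_itv cf h2 h3).
case.
  by rewrite ge_min le_max (ltW le21) /= orbT (cmax _ r1in).
move=> r; rewrite in_itv /= => /andP[k1 k2] fr.
exists r, (c - del); split; first by apply/eqP => e; lra.
split; first by apply/andP; split; lra.
split => //; split; first by rewrite ltr_distlC; apply/andP; split; lra.
by split => //; rewrite addrAC subrr add0r normrN ger0_norm; lra.
Qed.

Lemma min_case (f : RR -> RR) (a b c : RR) : a < b ->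
  (forall r, a <= r <= b -> {for r, continuous f}) -> f a = f b ->
  a <= c <= b -> (forall t, a <= t <= b -> f c <= f t) -> f c < f a ->
  nli f a b c.
Proof.
move=> ab cf fab /andP[ac cb] cmax fac d d0.
have ca : a < c by rewrite lt_neqAle ac andbT; apply/eqP => ea; move: fac; rewrite ea ltxx.
have cb' : c < b by rewrite lt_neqAle cb andbT; apply/eqP => eb; move: fac; rewrite eb -fab ltxx.
pose del := Num.min (d / 2) (Num.min ((c - a) / 2) ((b - c) / 2)).
have del0 : 0 < del by rewrite !lt_min; apply/and3P; split; lra.
have dd : del <= d / 2 by rewrite ge_min lexx.
have dca : del <= (c - a) / 2 by rewrite !ge_min lexx orbT.
have dcb : del <= (b - c) / 2 by rewrite !ge_min lexx !orbT.
have r1in : a <= c - del <= b by apply/andP; split; lra.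
have r2in : a <= c + del <= b by apply/andP; split; lra.
have [le12|le21] := leP (f (c + del)) (f (c - del)).
  have h1 : c - del <= c by lra.
  have h2 : a <= c - del by lra.
  have h3 : c <= b by lra.
  have := @IVT _ f (c - del) c (f (c + del)) h1 (cont_within_itv cf h2 h3).
  case.
    by rewrite ge_min le_max le12 (cmax _ r2in) !orbT.
  move=> r; rewrite in_itv /= => /andP[k1 k2] fr.
  exists r, (c + del); split; first by apply/eqP => e; lra.
  split; first by apply/andP; split; lra.
  split => //; split; first by rewrite ltr_distlC; apply/andP; split; lra.
  by split => //; rewrite addrAC subrr add0r ger0_norm; lra.
have h1 : c <= c + del by lra.
have h2 : a <= c by lra.
have h3 : c + del <= b by lra.
have := @IVT _ f c (c + del) (f (c - del)) h1 (cont_within_itv cf h2 h3).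
case.
  by rewrite ge_min le_max (ltW le21) (cmax _ r1in) !orbT.
move=> r; rewrite in_itv /= => /andP[k1 k2] fr.
exists r, (c - del); split; first by apply/eqP => e; lra.
split; first by apply/andP; split; lra.
split => //; split; first by rewrite ltr_distlC; apply/andP; split; lra.
by split => //; rewrite addrAC subrr add0r normrN ger0_norm; lra.
Qed.

Lemma equal_ends_nli (f : RR -> RR) (a b : RR) : a < b ->
  (forall r, a <= r <= b -> {for r, continuous f}) -> f a = f b ->
  exists c, a <= c <= b /\ nli f a b c.
Proof.
move=> ab cf fab.
have cw := cont_within_itv cf (lexx a) (lexx b).
have [cM cMin cmax] := EVT_max (ltW ab) cw.
have [cm cmin cmin'] := EVT_min (ltW ab) cw.
move: cMin cmin; rewrite !in_itv /= => cMin cmin.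
have ain : a <= a <= b by rewrite lexx /= ltW.
have bin : a <= b <= b by rewrite lexx /= ltW.
have [lt1|ge1] := ltP (f a) (f cM).
  exists cM; split => //; apply: max_case => // t ht; apply: cmax.
have [lt2|ge2] := ltP (f cm) (f a).
  exists cm; split => //.
  by apply: min_case => // t ht; apply: cmin'.
have fc : forall t, a <= t <= b -> f t = f a.
  move=> t ht; apply/eqP; rewrite eq_le; apply/andP; split.
    by apply: le_trans ge1; apply: cmax; rewrite in_itv.
  by apply: le_trans ge2 _; apply: cmin'; rewrite in_itv.
exists a; split => // d d0.
pose del := Num.min d (b - a) / 2.
have del0 : 0 < del by rewrite divr_gt0 // lt_min d0 subr_gt0.
have m1 : Num.min d (b - a) <= d by rewrite ge_min lexx.
have m2 : Num.min d (b - a) <= b - a by rewrite ge_min lexx orbT.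
have dd : del < d by rewrite /del; lra.
have db : del < b - a by rewrite /del; lra.
have rin : a <= a + del <= b by apply/andP; split; lra.
exists a, (a + del); split; first by apply/eqP => e; lra.
do 2!split => //; split; first by rewrite subrr normr0.
split; first by rewrite addrC addKr ger0_norm; lra.
by rewrite (fc _ rin).
Qed.
Lemma unit_open_open : open unit_open.
Proof.
have -> : unit_open = `]0, 1[%classic.
  by apply/seteqP; split => s; rewrite /= in_itv.
exact: interval_open.
Qed.

Lemma open_cont {X Y : topologicalType} (A : set X) (f : X -> Y) :
  open A -> {within A, continuous f} -> forall x, A x -> {for x, continuous f}.
Proof.
move=> oA cf x Ax; move: cf; rewrite continuous_open_subspace // => H.
by apply: H; rewrite inE.
Qed.

Lemma nbhs_delta (f : RR -> Prop) (c : RR) :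
  nbhs c f -> exists d, 0 < d /\ forall r, `|r - c| < d -> f r.
Proof.
move/nbhs_ballP => [d d0 H]; exists d; split => // r hr; apply: H.
by rewrite /ball /= distrC.
Qed.

Definition fbox (e : RR) := [set p : RR * RR | `|p.1| < e /\ unit_open p.2].
Definition fmap (T : topologicalType) (v : RR -> T -> T) (phi : RR -> T) :=
  fun p : RR * RR => v p.1 (phi p.2).

Lemma arc_parts (T : topologicalType) (v : RR -> T -> T) I phi :
  transverse_arc v I phi ->
  exists e (g : T -> RR * RR), 0 < e /\
   phi @` unit_open = I /\ {within unit_open, continuous phi} /\
   open (fmap v phi @` fbox e) /\
   {in fbox e &, injective (fmap v phi)} /\
   (forall y, (fmap v phi @` fbox e) y -> fbox e (g y) /\ fmap v phi (g y) = y) /\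
   {within fmap v phi @` fbox e, continuous g}.
Proof.
move=> [[img [_ [cphi _]]] [e [e0 [oO [_ [inj [_ [g [hg cg]]]]]]]]].
by exists e, g.
Qed.

Lemma snd_cont (X : topologicalType) (G : X -> RR * RR) r :
  {for r, continuous G} -> {for r, continuous (fun r => (G r).2)}.
Proof.
move=> cG S HS; have : nbhs (G r) (setT `*` S).
  by exists (setT, S) => //=; split => //; exact: filterT.
move/cG => H; by apply: (@filterS _ (nbhs r) _ _ _ _ H) => y [].
Qed.

Lemma fst_cont (X : topologicalType) (G : X -> RR * RR) r :
  {for r, continuous G} -> {for r, continuous (fun r => (G r).1)}.
Proof.
move=> cG S HS; have : nbhs (G r) (S `*` setT).
  by exists (S, setT) => //=; split => //; exact: filterT.
move/cG => H; by apply: (@filterS _ (nbhs r) _ _ _ _ H) => y [].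
Qed.

Lemma ball_nbhs (c d : RR) : 0 < d -> nbhs c [set u : RR | `|u - c| < d].
Proof.
by move=> d0; apply/nbhs_ballP; exists d => // u; rewrite /ball /= distrC.
Qed.

Lemma flowbox_nbhs (T : topologicalType) (v : RR -> T -> T) I0 phi0 x :
  is_flow v -> transverse_arc v I0 phi0 -> I0 x ->
  exists V a, nbhs x V /\ 0 < a /\
    forall I phi y t, transverse_arc v I phi -> I `<=` V -> I y -> I (v t y) ->
      0 < t -> t < a -> v t y <> y -> False.
Proof.
move=> fl tr0 Ix; have [_ [v0 vadd]] := fl.
have [e0 [g0 [e00 [img0 [cphi0 [oO0 [inj0 [hg0 cg0]]]]]]]] := arc_parts tr0.
have cg0w := open_cont oO0 cg0.
have gF : forall p, fbox e0 p -> g0 (fmap v phi0 p) = p.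
  move=> p Bp; have Op : (fmap v phi0 @` fbox e0) (fmap v phi0 p) by exists p.
  have [Bg Fg] := hg0 _ Op.
  by apply: inj0; rewrite ?inE.
move: Ix; rewrite -img0 => -[s0 Us0 xs0].
have Fx : fmap v phi0 (0, s0) = x by rewrite /fmap /= v0.
have B0x : fbox e0 (0, s0) by split => //=; rewrite normr0.
have Ox : (fmap v phi0 @` fbox e0) x by exists (0, s0).
have gx : g0 x = (0, s0) by rewrite -Fx gF.
exists [set w | (fmap v phi0 @` fbox e0) w /\ `|(g0 w).1| < e0 / 4], (e0 / 4).
split.
  apply: filterI; first by apply: open_nbhs_nbhs.
  have HS : nbhs (g0 x) [set p : RR * RR | `|p.1| < e0 / 4].
    rewrite gx; exists ([set r : RR | `|r - 0| < e0 / 4], setT) => /=.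
      by split; [apply: ball_nbhs; lra | exact: filterT].
    by move=> [p1 p2] [] /=; rewrite subr0.
  exact: (cg0w x Ox _ HS).
split; first lra.
move=> I phi y t tr IV Iy Ity t0 ta neq.
have [eI [gI [eI0 [imgI [cphiI [oOI [injI [hgI cgI]]]]]]]] := arc_parts tr.
have [Oy ty] := IV y Iy.
have [By Fy] := hg0 _ Oy.
have sig : (g0 (v t y)).2 = (g0 y).2.
  have Bq : fbox e0 ((g0 y).1 + t, (g0 y).2).
    split => /=; last by case: By.
    have := ler_normD (g0 y).1 t; rewrite (gtr0_norm t0); lra.
  have -> : v t y = fmap v phi0 ((g0 y).1 + t, (g0 y).2).
    by rewrite /fmap /= addrC vadd; congr (v t); symmetry; exact: Fy.
  by rewrite gF.
move: Iy Ity; rewrite -imgI => -[sy Usy ys] [sz Usz zs].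
pose h := fun r => (g0 (phi r)).2.
pose tau := fun r => (g0 (phi r)).1.
have IO : forall r, unit_open r -> (fmap v phi0 @` fbox e0) (phi r).
  move=> r Ur; have : I (phi r) by rewrite -imgI; exists r.
  by move/IV => [].
have cG : forall r, unit_open r -> {for r, continuous (g0 \o phi)}.
  move=> r Ur; apply: continuous_comp.
    exact: (open_cont unit_open_open cphiI).
  exact: (cg0w _ (IO r Ur)).
have key : forall a b, unit_open a -> unit_open b -> a < b -> h a = h b -> False.
  move=> a b /andP[a0 a1] /andP[b0 b1] ab hab.
  have Uab : forall r, a <= r <= b -> unit_open r.
    by move=> r /andP [h1 h2]; rewrite /unit_open /=; apply/andP; split; lra.
  have [c [cab nl]] := equal_ends_nli ab (fun r hr => snd_cont (cG r (Uab r hr))) hab.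
  have Uc := Uab c cab.
  have := fst_cont (cG c Uc) (ball_nbhs (tau c) (_ : 0 < eI / 2)).
  move=> /(_ ltac:(lra)) /nbhs_delta [del [del0 Hdel]].
  have [r [r' [rr' [rin [r'in [rc [r'c hrr']]]]]]] := nl del del0.
  have t1 := Hdel r rc; have t2 := Hdel r' r'c.
  have [Br Fr] := hg0 _ (IO r (Uab r rin)).
  have [Br' Fr'] := hg0 _ (IO r' (Uab r' r'in)).
  have e1 : phi r' = v (tau r' - tau r) (phi r).
    have -> : phi r = v (tau r) (phi0 (h r)) by rewrite /tau /h; symmetry; exact: Fr.
    have hh : h r = h r' := hrr'.
    by rewrite -vadd subrK hh /tau /h; symmetry; exact: Fr'.
  have : (tau r' - tau r, r) = (0, r').
    apply: injI; rewrite ?inE.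
    - split => //=; last exact: Uab.
      move: t1 t2; rewrite /= -/(tau r) -/(tau r') => t1 t2.
      have := ler_distD (tau c) (tau r') (tau r).
      rewrite (distrC (tau c)); lra.
    - by split => /=; [rewrite normr0 | exact: Uab].
    - by rewrite /fmap /= v0 -e1.
  by case => _ err; move: rr'; rewrite err eqxx.
have ne : sy != sz.
  by apply/eqP => e; apply: neq; rewrite -zs -ys e.
case: (ltgtP sy sz) ne => // [lt|lt] _.
  by apply: (key sy sz) => //; rewrite /h ys zs sig.
by apply: (key sz sy) => //; rewrite /h ys zs sig.
Qed.
Lemma holonomy_part (T : topologicalType) (v : RR -> T -> T) :
  hausdorff_space T -> is_flow v -> Clv v = Omegav v ->
  forall gamma : set T, ~ wandering_holonomy_circuit v gamma.
Proof.
move=> hT fl eq gamma [_ [x [gx [nsx Hhol]]]].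
have [_ [v0 vadd]] := fl.
have [I0 [phi0 [_ [I0x [tr0 [_ [_ dis0]]]]]]] := Hhol setT filterT.
have [[P [P0 vP]]|nper] := pselect (exists P, 0 < P /\ v P x = x).
  exact: (periodic_no_holonomy fl tr0 I0x P0 vP dis0).
have : Omegav v x.
  move=> U HU N; apply: contrapT => Hno.
  have [V [a [HV [a0 key]]]] := flowbox_nbhs fl tr0 I0x.
  have [V1 [HV1 noret]] := @no_return_near T v x a (Num.max a N) fl hT
    (fun t ht e => nper (ex_intro _ t (conj (lt_le_trans a0 (proj1 (andP ht))) e))).
  have HW : nbhs x (U `&` (V `&` V1)) by apply: filterI => //; apply: filterI.
  have [I [phi [IW [Ix [tr [_ [[y [z fr]] /disj_setPS dis]]]]]]] := Hhol _ HW.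
  have [Iy [t [t0 [tz [Iz _]]]]] := fr.
  have neq : v t y <> y.
    move=> e; have zy : z = y by rewrite -tz.
    apply: (dis y); split; first by exists z.
    by rewrite zy in fr; exists y.
  have [Ny|Ny] := leP N t.
    by apply: Hno; exists t; split => //; exists y; split; [case: (IW y Iy)|rewrite tz; case: (IW z Iz)].
  have [at_|at_] := leP a t.
    apply: (noret y t); first by case: (IW y Iy) => _ [].
      by rewrite at_ /= le_max (ltW Ny) orbT.
    by rewrite tz; case: (IW z Iz) => _ [].
  apply: (key I phi y t tr _ Iy _ t0 at_ neq); last by rewrite tz.
  by move=> w /IW [_ []].
rewrite -eq => -[//|[_ //]].
Qed.

Lemma limit_part (T : topologicalType) (v : RR -> T -> T) :
  hausdorff_space T -> is_flow v -> Clv v = Omegav v ->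
  forall gamma : set T, limit_circuit v gamma -> periodic_orbit v gamma.
Proof.
move=> hT fl eq gamma [[[f [_ [cf [rf _]]]] br] att].
have [_ [v0 vadd]] := fl.
have pt : std_annulus (3 / 2, 0) by rewrite /std_annulus /= !expr2; apply/andP; split; lra.
have sub : gamma `<=` Clv v.
  rewrite eq; case: att => -[A [[_ [_ [phiA [[imgA _] _]]]] H]].
    have Aa : A (phiA (3 / 2, 0)) by rewrite -imgA; exists (3 / 2, 0).
    have [om _] := H _ Aa; rewrite -om => g; exact: omega_nw.
  have Aa : A (phiA (3 / 2, 0)) by rewrite -imgA; exists (3 / 2, 0).
  have [al _] := H _ Aa; rewrite -al => g; exact: alpha_nw.
case: br => [//|[nsing [P [finP [Pg [Psing Hy]]]]]].
exfalso; apply: nsing; exists (f 0).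
have gP : gamma `<=` P.
  move=> y gy; case: (Hy y gy) => // -[[x' [ox [nsx [p [sp lim]]]]] orb].
  exfalso.
  have : Clv v x' by apply: sub; apply: orb; rewrite ox; exists 0 => //.
  move=> [//|[_ [Q [Q0 vQ]]]].
  have [om al] := periodic_limits fl Q0 vQ.
  by case: lim => e; [move: om|move: al]; rewrite e /= => hx; apply: nsx; rewrite hx.
rewrite -rf; apply: (finite_range_const hT cf finP).
by rewrite rf.
Qed.

Theorem mainTheorem9 (T : topologicalType) (v : RR -> T -> T) :
  compact_surface T -> is_flow v ->
  Clv v = Omegav v ->
  closed (Clv v) /\
  (forall x : T, recurrent v x -> Clv v x) /\
  (forall gamma : set T, limit_circuit v gamma -> periodic_orbit v gamma) /\
  (forall gamma : set T, ~ wandering_holonomy_circuit v gamma).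
Proof.
move=> [[hT _] _] fl eq.
split; first by rewrite eq; exact: Omega_closed.
split; first by move=> x; rewrite eq => -[om|al]; [exact: omega_nw om|exact: alpha_nw al].
split; first exact: limit_part.
exact: holonomy_part.
Qed.
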